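(* Let $\tau$ be a self-similar tile set. Then every $\tau$-tiling of the plane is aperiodic, i.e., no $\tau$-tiling $U$ admits a nonzero vector $T\in\mathbb{Z}^2$ with $U(x+T)=U(x)$ for all $x\in\mathbb{Z}^2$.
   Context: Fix a finite set $C$ of colors. A tile is an element of $C^4$ (its left, right, top and bottom colors); a tile set is a finite subset $\tau\subset C^4$. A $\tau$-tiling (of the plane) is a map $U\colon\mathbb{Z}^2\to\tau$ such that for every $(x,y)$ the right color of $U(x,y)$ equals the left color of $U(x+1,y)$ and the top color of $U(x,y)$ equals the bottom color of $U(x,y+1)$; a tiling of a finite region is defined the same way, requiring matching only for adjacent cells inside the region. For a tile set $\tau$ and an integer $N>1$, an $N\times N$ macro-tile is a $\tau$-tiling of an $N\times N$ square; its right (left, top, bottom) macro-color is the sequence of the $N$ right (left, top, bottom) colors of the tiles along its right (left, top, bottom) side. A simulation of a tile set $\rho$ by a tile set $\tau$ with zoom factor $N>1$ is a map $S$ from $\rho$ to $N\times N$ $\tau$-macro-tiles such that: (i) $S$ is injective; (ii) for all $r_1,r_2\in\rho$, the right color of $r_1$ equals the left color of $r_2$ iff the right macro-color of $S(r_1)$ equals the left macro-color of $S(r_2)$, and similarly for top/bottom; (iii) every $\tau$-tiling of the plane can be split by horizontal and vertical lines into $N\times N$ macro-tiles all belonging to the range of $S$, and this splitting is unique. A tile set is self-similar if it simulates itself (with some zoom factor $N>1$). *)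

(* Defs.v *)
From HB Require Import structures.
From mathcomp Require Import all_boot all_order all_algebra.
Set Implicit Arguments. Unset Strict Implicit. Unset Printing Implicit Defensive.
Import GRing.Theory Num.Theory.
Local Open Scope ring_scope.

Definition tile (C : finType) : finType := (C * C * C * C)%type.
Definition tleft   (C : finType) (t : tile C) : C := t.1.1.1.
Definition tright  (C : finType) (t : tile C) : C := t.1.1.2.
Definition ttop    (C : finType) (t : tile C) : C := t.1.2.
Definition tbottom (C : finType) (t : tile C) : C := t.2.

Definition is_tiling (C : finType) (tau : {set tile C}) (U : int -> int -> tile C) : Prop :=
  forall x y : int,
    [/\ U x y \in tau,
        tright (U x y) = tleft (U (x + 1) y)
      & ttop (U x y) = tbottom (U x (y + 1))].

(* An N x N array of tiles, indexed (column x, row y), x to the right, y up. *)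
Definition macro (C : finType) (N : nat) := {ffun 'I_N * 'I_N -> tile C}.

Definition is_macro_tile (C : finType) (tau : {set tile C}) (N : nat) (M : macro C N) : Prop :=
  (forall p, M p \in tau) /\
  (forall x x' y : 'I_N, (x' : nat) = (x.+1)%N -> tright (M (x, y)) = tleft (M (x', y))) /\
  (forall x y y' : 'I_N, (y' : nat) = (y.+1)%N -> ttop (M (x, y)) = tbottom (M (x, y'))).

(* Cells are enumerated
   in the (lexicographic) order of enum ('I_N * 'I_N); on a vertical side this
   lists the cells by increasing y, on a horizontal side by increasing x, so
   opposite sides are listed in corresponding order. *)
Definition rmacro (C : finType) (N : nat) (M : macro C N) : seq C :=
  [seq tright (M p) | p <- enum [pred p : 'I_N * 'I_N | (p.1.+1 == N)%N]].
Definition lmacro (C : finType) (N : nat) (M : macro C N) : seq C :=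
  [seq tleft (M p) | p <- enum [pred p : 'I_N * 'I_N | ((p.1 : nat) == 0)%N]].
Definition tmacro (C : finType) (N : nat) (M : macro C N) : seq C :=
  [seq ttop (M p) | p <- enum [pred p : 'I_N * 'I_N | (p.2.+1 == N)%N]].
Definition bmacro (C : finType) (N : nat) (M : macro C N) : seq C :=
  [seq tbottom (M p) | p <- enum [pred p : 'I_N * 'I_N | ((p.2 : nat) == 0)%N]].

Definition block (C : finType) (N : nat) (U : int -> int -> tile C)
    (a b : 'I_N) (i j : int) : macro C N :=
  [ffun p : 'I_N * 'I_N =>
     U (a%:Z + N%:Z * i + (p.1)%:Z) (b%:Z + N%:Z * j + (p.2)%:Z)].

Definition simulation (C' C : finType) (rho : {set tile C'}) (tau : {set tile C})
    (N : nat) (S : tile C' -> macro C N) : Prop :=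
  [/\ (1 < N)%N,
      (forall r, r \in rho -> is_macro_tile tau (S r)),
      {in rho &, injective S},
      (forall r1 r2, r1 \in rho -> r2 \in rho ->
         (tright r1 = tleft r2 <-> rmacro (S r1) = lmacro (S r2)) /\
         (ttop r1 = tbottom r2 <-> tmacro (S r1) = bmacro (S r2)))
    & (forall U, is_tiling tau U ->
         exists! ab : 'I_N * 'I_N,
           forall i j : int, exists2 r, r \in rho & block U ab.1 ab.2 i j = S r)].

Arguments simulation {C' C} rho tau N S.

Definition self_similar (C : finType) (tau : {set tile C}) : Prop :=
  exists N (S : tile C -> macro C N), simulation tau tau N S.

(* Main.v *)
Require Import Defs.
From HB Require Import structures.
From mathcomp Require Import all_boot all_order all_algebra.
Import Order.TTheory GRing.Theory Num.Theory.
Local Open Scope ring_scope.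

Lemma flatten_if (T U : Type) (P : pred T) (f : T -> seq U) e :
  flatten [seq (if P x then f x else [::]) | x <- e] = flatten [seq f x | x <- filter P e].
Proof. by elim: e => //= x e IH; case: (P x) => //=; rewrite IH. Qed.

Lemma enum_prodE (T1 T2 : finType) (P : pred (T1*T2)) : enum P = filter P (prod_enum T1 T2).
Proof. by rewrite /enum_mem unlock. Qed.

Lemma enum_fst N (x0 : 'I_N) (P1 : pred 'I_N) : P1 =1 pred1 x0 ->
  enum [pred p : 'I_N * 'I_N | P1 p.1] = [seq (x0, y) | y <- enum 'I_N].
Proof.
move=> H; rewrite enum_prodE /prod_enum filter_flatten -map_comp.
rewrite (eq_map (g := fun x => if P1 x then [seq (x, y) | y <- enum 'I_N] else [::])).
  rewrite flatten_if.
  have -> : filter P1 (enum 'I_N) = [:: x0].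
    by rewrite enumT -[filter _ _]/(enum P1) (eq_enum H) enum1.
  by rewrite /= cats0.
move=> x /=; rewrite filter_map; case: (boolP (P1 x)) => Hx.
  by rewrite (@eq_filter _ _ predT) ?filter_predT // => y /=.
by rewrite (@eq_filter _ _ pred0) ?filter_pred0 // => y /=; apply/negbTE.
Qed.

Lemma enum_snd N (y0 : 'I_N) (P2 : pred 'I_N) : P2 =1 pred1 y0 ->
  enum [pred p : 'I_N * 'I_N | P2 p.2] = [seq (x, y0) | x <- enum 'I_N].
Proof.
move=> H; rewrite enum_prodE /prod_enum filter_flatten -map_comp.
have E : filter P2 (enum 'I_N) = [:: y0].
  by rewrite enumT -[filter _ _]/(enum P2) (eq_enum H) enum1.
rewrite (eq_map (g := fun x => [:: (x, y0)])).
  by elim: (enum 'I_N) => //= x e ->.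
by move=> x /=; rewrite filter_map /= -[RHS]/(map (pair x) [:: y0]) -E.
Qed.

Lemma rmacroE (C : finType) N (M : macro C N) (xl : 'I_N) : xl.+1 = N ->
  rmacro M = [seq tright (M (xl, y)) | y <- enum 'I_N].
Proof.
move=> h; rewrite /rmacro (@enum_fst N xl (fun x : 'I_N => x.+1 == N)) -?map_comp //.
by move=> x /=; have -> : (x.+1 == N) = (x.+1 == xl.+1) by rewrite h.  
Qed.

Lemma lmacroE (C : finType) N (M : macro C N) (x0 : 'I_N) : x0 = 0%N :> nat ->
  lmacro M = [seq tleft (M (x0, y)) | y <- enum 'I_N].
Proof.
move=> h; rewrite /lmacro (@enum_fst N x0 (fun x : 'I_N => (x : nat) == 0%N)) -?map_comp //.
by move=> x /=; rewrite -(inj_eq val_inj) /= h.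
Qed.

Lemma tmacroE (C : finType) N (M : macro C N) (xl : 'I_N) : xl.+1 = N ->
  tmacro M = [seq ttop (M (y, xl)) | y <- enum 'I_N].
Proof.
move=> h; rewrite /tmacro (@enum_snd N xl (fun x : 'I_N => x.+1 == N)) -?map_comp //.
by move=> x /=; have -> : (x.+1 == N) = (x.+1 == xl.+1) by rewrite h.  
Qed.

Lemma bmacroE (C : finType) N (M : macro C N) (x0 : 'I_N) : x0 = 0%N :> nat ->
  bmacro M = [seq tbottom (M (y, x0)) | y <- enum 'I_N].
Proof.
move=> h; rewrite /bmacro (@enum_snd N x0 (fun x : 'I_N => (x : nat) == 0%N)) -?map_comp //.
by move=> x /=; rewrite -(inj_eq val_inj) /= h.
Qed.

Lemma arith1 (a a' t q i p d : int) : a' + d * q = a + t ->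
  a' + d * i + p = a + d * (i - q) + p + t.
Proof.
move=> h; have -> : a' = a + t - d * q by rewrite -h addrK.
rewrite mulrBr -!addrA; congr (a + _).
rewrite addrCA [RHS]addrCA; congr (_ + _).
by rewrite addrCA [p + t]addrC.
Qed.

Lemma block_shift (C : finType) (U : int -> int -> tile C) t1 t2 N (a a' b b' : 'I_N) q1 q2 :
 (forall x y, U (x + t1) (y + t2) = U x y) ->
 a'%:Z + N%:Z * q1 = a%:Z + t1 -> b'%:Z + N%:Z * q2 = b%:Z + t2 ->
 forall i j, block U a' b' i j = block U a b (i - q1) (j - q2).
Proof.
move=> per ha hb i j; apply/ffunP => p; rewrite !ffunE -[RHS]per.
by rewrite (@arith1 _ _ _ _ i _ _ ha) (@arith1 _ _ _ _ j _ _ hb).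
Qed.

Lemma arith2 N (x : int) : (0 < N)%N -> x + N%:Z = x + (N.-1)%:Z + 1.
Proof. by move=> h; rewrite -addrA -PoszD addn1 prednK. Qed.

Lemma block_rl (C : finType) (tau : {set tile C}) U N (a b : 'I_N) i j :
  is_tiling tau U -> (0 < N)%N ->
  rmacro (block U a b i j) = lmacro (block U a b (i + 1) j).
Proof.
move=> HU N0.
rewrite (@rmacroE _ _ _ (Ordinal (eq_ind_r is_true N0 (ltn_predL N) : (N.-1 < N)%N))) /= ?prednK //.
rewrite (@lmacroE _ _ _ (Ordinal N0)) //.
apply: eq_map => y; rewrite !ffunE /=.
case: (HU (a%:Z + N%:Z * i + (N.-1)%:Z) (b%:Z + N%:Z * j + y)) => _ -> _.
by rewrite addr0 mulrDr mulr1 addrA (@arith2 N _ N0).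
Qed.

Lemma block_tb (C : finType) (tau : {set tile C}) U N (a b : 'I_N) i j :
  is_tiling tau U -> (0 < N)%N ->
  tmacro (block U a b i j) = bmacro (block U a b i (j + 1)).
Proof.
move=> HU N0.
rewrite (@tmacroE _ _ _ (Ordinal (eq_ind_r is_true N0 (ltn_predL N) : (N.-1 < N)%N))) /= ?prednK //.
rewrite (@bmacroE _ _ _ (Ordinal N0)) //.
apply: eq_map => y; rewrite !ffunE /=.
case: (HU (a%:Z + N%:Z * i + y) (b%:Z + N%:Z * j + (N.-1)%:Z)) => _ _ ->.
by rewrite addr0 mulrDr mulr1 addrA (@arith2 N _ N0).
Qed.

Lemma step (C : finType) (tau : {set tile C}) N (S : tile C -> macro C N) :
  simulation tau tau N S ->
  forall U t1 t2, is_tiling tau U -> (forall x y, U (x + t1) (y + t2) = U x y) ->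
  exists q1 q2 (U1 : int -> int -> tile C),
    [/\ is_tiling tau U1, t1 = N%:Z * q1, t2 = N%:Z * q2
      & forall x y, U1 (x + q1) (y + q2) = U1 x y].
Proof.
case=> N1 Hmt Hinj Hcol Hsplit U t1 t2 HU per.
have N0 : (0 < N)%N by apply: ltnW.
have d0 : (0 < N%:Z) by rewrite ltz_nat.
have [[a b] [/= Hab Huniq]] := Hsplit U HU.
have mod_lt : forall m : int, (`|(m %% N%:Z)%Z| < N)%N.
  move=> m; rewrite -ltz_nat gez0_abs ?ltz_pmod // modz_ge0 //.
  by rewrite gt_eqF.
have mod_eq : forall m : int, `|(m %% N%:Z)%Z|%:Z + N%:Z * (m %/ N%:Z)%Z = m.
  move=> m; rewrite gez0_abs ?modz_ge0 ?gt_eqF // addrC mulrC -divz_eq //.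
pose a' := Ordinal (mod_lt (a%:Z + t1)).
pose b' := Ordinal (mod_lt (b%:Z + t2)).
have Ha' := mod_eq (a%:Z + t1).
have Hb' := mod_eq (b%:Z + t2).
set q1 := ((a%:Z + t1) %/ N%:Z)%Z in Ha'.
set q2 := ((b%:Z + t2) %/ N%:Z)%Z in Hb'.
have Hsh := @block_shift C U t1 t2 N a a' b b' q1 q2 per Ha' Hb'.
have Hab' : forall i j : int, exists2 r, r \in tau & block U a' b' i j = S r.
  by move=> i j; rewrite Hsh; apply: Hab.
have := Huniq (a', b') Hab' => -[ea eb].
have et1 : t1 = N%:Z * q1.
  apply: (@addrI _ (a%:Z)); rewrite -[LHS]Ha'; congr (_ + _).
  by have := congr1 val ea => /= <-.
have et2 : t2 = N%:Z * q2.
  apply: (@addrI _ (b%:Z)); rewrite -[LHS]Hb'; congr (_ + _).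
  by have := congr1 val eb => /= <-.
pose U1 i j := odflt (U 0 0) [pick r in tau | block U a b i j == S r].
have HU1 : forall i j, U1 i j \in tau /\ block U a b i j = S (U1 i j).
  move=> i j; rewrite /U1; case: pickP => [r /andP[rt /eqP e] | none] /=; first by [].
  by have [r rt e] := Hab i j; move: (none r); rewrite rt e eqxx.
exists q1, q2, U1; split => //.
- move=> i j; have [r1 e1] := HU1 i j; have [r2 e2] := HU1 (i+1) j.
  have [r3 e3] := HU1 i (j+1); split => //.
  + apply: (proj2 (proj1 (Hcol _ _ r1 r2))); rewrite -e1 -e2; exact: block_rl HU N0.
  + apply: (proj2 (proj2 (Hcol _ _ r1 r3))); rewrite -e1 -e3; exact: block_tb HU N0.
move=> x y; apply: Hinj; [exact: (HU1 _ _).1 | exact: (HU1 _ _).1 |].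
rewrite -(HU1 _ _).2 -(HU1 _ _).2.
have e1 : a%:Z + N%:Z * q1 = a%:Z + t1 by rewrite et1.
have e2 : b%:Z + N%:Z * q2 = b%:Z + t2 by rewrite et2.
by rewrite (@block_shift C U t1 t2 N a a b b q1 q2 per e1 e2) !addrK.
Qed.

Lemma iter_step (C : finType) (tau : {set tile C}) N (S : tile C -> macro C N) :
  simulation tau tau N S -> forall k U t1 t2, is_tiling tau U ->
  (forall x y, U (x + t1) (y + t2) = U x y) ->
  exists q1 q2, t1 = N%:Z ^+ k * q1 /\ t2 = N%:Z ^+ k * q2.
Proof.
move=> sim; elim=> [|k IH] U t1 t2 HU per.
  by exists t1, t2; rewrite expr0 !mul1r.
have [q1 [q2 [U1 [HU1 e1 e2 per1]]]] := @step _ _ _ _ sim _ _ _ HU per.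
have [r1 [r2 [f1 f2]]] := IH U1 q1 q2 HU1 per1.
by exists r1, r2; rewrite e1 e2 f1 f2 exprS !mulrA.
Qed.

Lemma small_zero N k (t q : int) : (1 < N)%N -> t = N%:Z ^+ k * q -> (`|t| <= k)%N -> t = 0.
Proof.
move=> N1 e le; case: (eqVneq q 0) => [q0|nq]; first by rewrite e q0 mulr0.
exfalso; move: le; rewrite e abszM abszX absz_nat => le.
have q0 : (0 < `|q|)%N by rewrite absz_gt0.
by have := leq_trans (ltn_expl k N1) (leq_pmulr _ q0); rewrite ltnNge le.
Qed.

Theorem mainTheorem1 (C : finType) (tau : {set tile C}) :
  self_similar tau ->
  forall U : int -> int -> tile C, is_tiling tau U ->
  forall t1 t2 : int, (t1, t2) != (0, 0) ->
  ~ (forall x y : int, U (x + t1) (y + t2) = U x y).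
Proof.
move=> [N [S sim]] U HU t1 t2 nz per.
have N1 : (1 < N)%N by case: sim.
have [q1 [q2 [e1 e2]]] := @iter_step _ _ _ _ sim (`|t1| + `|t2|)%N _ _ _ HU per.
have z1 := @small_zero _ _ _ _ N1 e1 (leq_addr _ _).
have z2 := @small_zero _ _ _ _ N1 e2 (leq_addl _ _).
by move: nz; rewrite z1 z2 eqxx.
Qed.
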